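(* Let $A\in\mathbb{R}^{n\times n}$ be symmetric, $Z\in\mathbb{R}^{n\times k}$, $\alpha\in\{+1,-1\}$, $\beta\in\{+1,-1\}$, and suppose that both $A$ and $A+\alpha ZZ^{T}$ are positive definite. Let $V\in\mathbb{R}^{n\times k}$ be defined by $V=Z$ if $\beta=1$ and $V=A^{-1}Z(I_k+\alpha Z^{T}A^{-1}Z)^{-1/2}$ if $\beta=-1$, and for $\tilde{C}\in\mathbb{R}^{n\times n}$ let $R(\tilde{C})=VV^{T}-A^{\beta/2}\tilde{C}-\tilde{C}A^{\beta/2}-\alpha\beta\tilde{C}^{2}$. Let $\tilde{C}$ be a positive semidefinite matrix such that $A^{\beta/2}+\alpha\beta\tilde{C}$ is positive definite. Then \[ \|(A+\alpha ZZ^{T})^{\beta/2}-(A^{\beta/2}+\alpha\beta\tilde{C})\|_{F}\leq\left(n^{1/2}\|R(\tilde{C})\|_{F}\right)^{1/2}, \] \[ \|(A+\alpha ZZ^{T})^{\beta/2}-(A^{\beta/2}+\alpha\beta\tilde{C})\|_{2}\leq\min\left\{ \frac{\|R(\tilde{C})\|_{F}}{\sqrt{\lambda_{\min}((A+\alpha ZZ^{T})^{\beta})}},\left(n^{1/2}\|R(\tilde{C})\|_{F}\right)^{1/2}\right\}. \]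
   Context: For a symmetric positive definite matrix $M$, $M^{1/2}$ is its principal square root and $M^{-1/2}=(M^{1/2})^{-1}$; $M^{\beta/2},M^{\beta}$ are interpreted accordingly. $\|\cdot\|_F$ is the Frobenius norm, $\|\cdot\|_2$ the spectral norm, $\lambda_{\min}$ the smallest eigenvalue. *)

(* Defs.v *)
From HB Require Import structures.
From mathcomp Require Import all_boot all_order all_algebra.
From mathcomp Require Import boolp classical_sets reals.
Set Implicit Arguments. Unset Strict Implicit. Unset Printing Implicit Defensive.
Import Order.TTheory GRing.Theory Num.Theory.
Local Open Scope ring_scope.
Local Open Scope classical_set_scope.

Section MatDefs.
Variable R : realType.

Definition symmx n (M : 'M[R]_n) : Prop := M^T = M.

Definition posdef n (M : 'M[R]_n) : Prop :=
  symmx M /\ forall x : 'cV[R]_n, x != 0 -> 0 < (x^T *m M *m x) 0 0.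
Definition psd n (M : 'M[R]_n) : Prop :=
  symmx M /\ forall x : 'cV[R]_n, 0 <= (x^T *m M *m x) 0 0.

(* principal square root: the (unique) positive semidefinite S with S S = M
   (chosen classically; 0 if none exists, never used in that case) *)
Definition sqrtmx n (M : 'M[R]_n) : 'M[R]_n :=
  xget 0 [set S : 'M[R]_n | psd S /\ S *m S = M].

Definition halfpowmx n (b : R) (M : 'M[R]_n) : 'M[R]_n :=
  if b == 1 then sqrtmx M else invmx (sqrtmx M).

Definition powmx n (b : R) (M : 'M[R]_n) : 'M[R]_n :=
  if b == 1 then M else invmx M.

Definition frobenius m n (M : 'M[R]_(m, n)) : R :=
  Num.sqrt (\sum_i \sum_j M i j ^+ 2).

Definition vnorm2 n (x : 'cV[R]_n) : R := Num.sqrt (\sum_i x i 0 ^+ 2).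

Definition specnorm m n (M : 'M[R]_(m, n)) : R :=
  sup [set r : R | exists x : 'cV[R]_n, vnorm2 x = 1 /\ r = vnorm2 (M *m x)].

Definition lambda_min n (M : 'M[R]_n) : R := inf [set a : R | eigenvalue M a].

End MatDefs.

(* Main.v *)
Require Import Defs.
From HB Require Import structures.
From mathcomp Require Import all_boot all_order all_algebra.
From mathcomp Require Import boolp classical_sets reals.
From mathcomp Require Import complex.
From mathcomp Require Import ring lra.
Import Order.TTheory GRing.Theory Num.Theory.
Local Open Scope ring_scope.
Set Implicit Arguments. Unset Strict Implicit. Unset Printing Implicit Defensive.

Section S. Variable R : realType.
Definition dot n (x y : 'cV[R]_n) : R := (x^T *m y) 0 0.
Lemma dotE n (x y : 'cV[R]_n) : dot x y = \sum_i x i 0 * y i 0.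
Proof. by rewrite /dot mxE; apply: eq_bigr => i _; rewrite mxE. Qed.
Lemma dotC n (x y : 'cV[R]_n) : dot x y = dot y x.
Proof. by rewrite !dotE; apply: eq_bigr => i _; rewrite mulrC. Qed.
Lemma dot_ge0 n (x : 'cV[R]_n) : 0 <= dot x x.
Proof. by rewrite dotE sumr_ge0 // => i _; rewrite -expr2 sqr_ge0. Qed.
Lemma dot_eq0 n (x : 'cV[R]_n) : dot x x = 0 -> x = 0.
Proof.
rewrite dotE => /eqP; rewrite psumr_eq0 => [/allP H|i _]; last by rewrite -expr2 sqr_ge0.
apply/matrixP => i j; rewrite ord1 mxE; apply/eqP.
by rewrite -sqrf_eq0 expr2; apply: (implyP (H i (mem_index_enum _))).
Qed.
Lemma mx11E (M : 'M[R]_1) : M = (M 0 0)%:M.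
Proof. by apply/matrixP => i j; rewrite !ord1 !mxE eqxx. Qed.
Lemma mul_dot m n (x : 'M[R]_(m,1)) (y z : 'cV[R]_n) : x *m (y^T *m z) = dot y z *: x.
Proof. by rewrite {1}[y^T *m z]mx11E mul_mx_scalar. Qed.
Lemma dotDl n (x y z : 'cV[R]_n) : dot (x + y) z = dot x z + dot y z.
Proof. by rewrite !dotE -big_split; apply: eq_bigr => i _; rewrite mxE mulrDl. Qed.
Lemma dotBl n (x y z : 'cV[R]_n) : dot (x - y) z = dot x z - dot y z.
Proof. by rewrite !dotE -sumrB; apply: eq_bigr => i _; rewrite !mxE mulrBl. Qed.
Lemma dotZl n a (x z : 'cV[R]_n) : dot (a *: x) z = a * dot x z.
Proof. by rewrite !dotE mulr_sumr; apply: eq_bigr => i _; rewrite !mxE mulrA. Qed.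
Lemma dotDr n (x y z : 'cV[R]_n) : dot z (x + y) = dot z x + dot z y.
Proof. by rewrite !(dotC z) dotDl. Qed.
Lemma dotBr n (x y z : 'cV[R]_n) : dot z (x - y) = dot z x - dot z y.
Proof. by rewrite !(dotC z) dotBl. Qed.
Lemma dotZr n a (x z : 'cV[R]_n) : dot z (a *: x) = a * dot z x.
Proof. by rewrite !(dotC z) dotZl. Qed.

Definition e0 n : 'cV[R]_n.+1 := delta_mx 0 0.

Lemma householder n (u : 'cV[R]_n.+1) : dot u u = 1 ->
  exists H : 'M_n.+1, [/\ H^T = H, H *m H = 1%:M & H *m e0 n = u].
Proof.
move=> uu.
set w := u - e0 n; set s := dot w w.
have [s0|sn0] := eqVneq s 0.
  exists 1%:M; split; rewrite ?trmx1 ?mul1mx //.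
  by move/dot_eq0/eqP : s0; rewrite subr_eq0 => /eqP.
have ee : dot (e0 n) (e0 n) = 1.
  by rewrite dotE (bigD1 0) //= big1 ?addr0 => [|i /negPf ni]; rewrite !mxE ?ni ?eqxx ?mulr1 ?mul0r.
have hs : s = 2 - 2 * dot u (e0 n).
  by rewrite /s /w !(dotBl, dotBr) uu ee (dotC (e0 n)); ring.
have hwe : dot w (e0 n) = dot u (e0 n) - 1 by rewrite /w dotBl ee.
exists (1%:M - (2 / s) *: (w *m w^T)); split.
- by rewrite linearB /= trmx1 linearZ /= trmx_mul trmxK.
- have PP : w *m w^T *m (w *m w^T) = s *: (w *m w^T).
    by rewrite mulmxA -[w *m w^T *m w]mulmxA mul_dot -scalemxAl.
  rewrite mulmxBl mulmxBr mulmx1 mul1mx mulmxBr mulmx1 -scalemxAl -scalemxAr scalerA PP scalerA.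
  have -> : 2 / s * (2 / s) * s = 2 / s + 2 / s by field.
  by rewrite scalerDl; set T := (2 / s) *: _; rewrite opprB addrA -addrA addrK subrK.
- rewrite mulmxBl mul1mx -scalemxAl -mulmxA mul_dot hwe scalerA.
  have -> : 2 / s * (dot u (e0 n) - 1) = -1.
    by rewrite hs; field; rewrite -hs.
  by rewrite scaleN1r opprK /w addrC subrK.
Qed.
Lemma real_eigen n (A : 'M[R]_n.+1) : A^T = A ->
  exists (a : R) (v : 'cV_n.+1), v != 0 /\ A *m v = a *: v.
Proof.
move=> As.
pose f := (real_complex R).
pose AC : 'M[R[i]]_n.+1 := map_mx f A.
have ACh : AC \is hermsymmx.
  rewrite is_hermitianmxE expr0 scale1r; apply/eqP/matrixP => i j.
  rewrite !mxE -[in LHS]As mxE; apply/esym; exact: (conjc_real (A j i)).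
have /orthomx_spectralP ACe := hermitian_normalmx ACh.
have dreal := hermitian_spectral_diag_real ACh.
set P := spectralmx AC in ACe; set d := spectral_diag AC in ACe dreal.
have Pu : P \in unitmx by apply: spectral_unit.
have PA : P *m AC = diag_mx d *m P.
  by rewrite {1}ACe !mulmxA mulmxV // mul1mx.
have ev : eigenvalue AC (d 0 0).
  apply/eigenvalueP; exists (row 0 P).
    rewrite -row_mul PA; apply/rowP => j; rewrite !mxE.
    rewrite (bigD1 0) //= big1 ?addr0; first by rewrite !mxE eqxx mulr1n.
    by move=> i /negPf ni; rewrite !mxE eq_sym ni mulr0n mul0r.
  apply/eqP => /(congr1 (mulmx^~ (invmx P))); rewrite -row_mul mulmxV // mul0mx.
  by move/rowP/(_ 0); rewrite !mxE eqxx /= => /eqP; rewrite oner_eq0.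
have : d 0 0 \is Num.real by move/mxOverP : dreal; apply.
move=> /RRe_real dr; rewrite -dr in ev.
have := ev; rewrite (eigenvalue_map f) => /eigenvalueP [v vA vn0].
exists (complex.Re (d 0 0)), v^T; split; first by rewrite trmx_eq0.
by rewrite -[A]As -trmx_mul vA linearZ.
Qed.

Lemma block_orth n (Q' : 'M[R]_n) : Q'^T *m Q' = 1%:M ->
  (block_mx 1%:M 0 0 Q' : 'M_(1 + n))^T *m (block_mx 1%:M 0 0 Q') = 1%:M.
Proof.
move=> Qo; rewrite tr_block_mx !trmx0 trmx1 mulmx_block !mulmx0 !mul0mx !addr0 !add0r mulmx1 Qo.
by rewrite -scalar_mx_block.
Qed.

Lemma block_diag n (a : R) (Q' : 'M[R]_n) d' :
  (block_mx 1%:M 0 0 Q' : 'M_(1 + n)) *m diag_mx (row_mx (a%:M : 'rV_1) d')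
   *m (block_mx 1%:M 0 0 Q')^T = block_mx a%:M 0 0 (Q' *m diag_mx d' *m Q'^T).
Proof.
rewrite tr_block_mx !trmx0 trmx1 diag_mx_row.
have -> : diag_mx (a%:M : 'rV_1) = a%:M by apply/matrixP => i j; rewrite !ord1 !mxE.
by rewrite !mulmx_block !mulmx0 !mul0mx !addr0 !add0r mulmx1 mul1mx mulmx1 !mul0mx.
Qed.

Lemma spectral n (A : 'M[R]_n) : A^T = A ->
  exists (Q : 'M_n) (d : 'rV_n), Q^T *m Q = 1%:M /\ A = Q *m diag_mx d *m Q^T.
Proof.
elim: n A => [|n IH] A As.
  by exists 1%:M, 0; split; [rewrite mulmx1 trmx1 | apply/matrixP => [] [] //].
have [a [v [vn0 Av]]] := real_eigen As.
have vv : 0 < dot v v.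
  by rewrite lt_def dot_ge0 andbT; apply/eqP => /dot_eq0 /eqP; rewrite (negPf vn0).
set u := (Num.sqrt (dot v v))^-1 *: v.
have uu : dot u u = 1.
  rewrite dotZl dotZr mulrA -expr2 exprVn sqr_sqrtr ?mulVf //; first by rewrite gt_eqF.
  exact: ltW.
have Au : A *m u = a *: u by rewrite /u -scalemxAr Av !scalerA mulrC.
have [H [Hs HH He]] := householder uu.
set B := H *m A *m H.
have Bs : B^T = B by rewrite /B !trmx_mul Hs As mulmxA.
have Be : B *m e0 n = a *: e0 n.
  by rewrite /B -mulmxA He -mulmxA Au -scalemxAr -He mulmxA HH mul1mx.
have BE : B = H *m A *m H by [].
clearbody B.
have B0 : forall i j, nat_of_ord j = 0%N -> B i j = a * (nat_of_ord i == 0%N)%:R.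
  move=> i j j0; have -> : j = 0 by apply/val_inj.
  have -> : B i 0 = (B *m e0 n) i 0.
    rewrite [RHS]mxE (bigD1 0) //= big1 ?addr0 => [|k nj]; rewrite /e0 mxE; first by rewrite mulr1.
    by rewrite (negPf nj) mulr0.
  by rewrite Be /e0 !mxE andbT.
set A' := drsubmx (B : 'M_(1 + n)).
have A's : A'^T = A' by rewrite /A' trmx_drsub Bs.
have [Q' [d' [Q'o A'e]]] := IH A' A's.
have Bb : (B : 'M_(1 + n)) = block_mx a%:M 0 0 A'.
  rewrite -[LHS](@submxK _ 1 n 1 n); congr block_mx.
  - by apply/matrixP => i j; rewrite !ord1 !mxE mulr1n B0 // mulr1.
  - by apply/matrixP => i j; rewrite !ord1 !mxE -Bs mxE B0 // mulr0.
  - by apply/matrixP => i j; rewrite !ord1 !mxE B0 // mulr0.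
have K1 := block_orth Q'o.
have K2 := block_diag a Q' d'.
exists (H *m (block_mx 1%:M 0 0 Q' : 'M_(1 + n))), (row_mx a%:M d'); split.
  rewrite trmx_mul Hs mulmxA -[_ *m H *m H]mulmxA HH mulmx1; exact: K1.
rewrite trmx_mul Hs.
transitivity (H *m ((block_mx 1%:M 0 0 Q' : 'M_(1 + n)) *m diag_mx (row_mx a%:M d')
   *m (block_mx 1%:M 0 0 Q' : 'M_(1 + n))^T) *m H); last by rewrite !mulmxA.
rewrite K2 -A'e -Bb BE !mulmxA HH mul1mx -mulmxA HH mulmx1 //.
Qed.
End S.

Section S. Variable R : realType.

Definition orth n (Q : 'M[R]_n) := Q^T *m Q = 1%:M.
Lemma orthT n (Q : 'M[R]_n) : orth Q -> Q *m Q^T = 1%:M.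
Proof. exact: mulmx1C. Qed.

Lemma dot_mulr m n (M : 'M[R]_(m, n)) (x : 'cV[R]_m) (y : 'cV[R]_n) : dot x (M *m y) = dot (M^T *m x) y.
Proof. by rewrite /dot trmx_mul trmxK mulmxA. Qed.

Lemma qfE n (M : 'M[R]_n) x : (x^T *m M *m x) 0 0 = dot x (M *m x).
Proof. by rewrite /dot mulmxA. Qed.

Lemma diag_mulE n (d : 'rV[R]_n) (y : 'cV_n) i : (diag_mx d *m y) i 0 = d 0 i * y i 0.
Proof.
rewrite mxE (bigD1 i) //= big1 ?addr0; first by rewrite !mxE eqxx mulr1n.
by move=> j /negPf nj; rewrite !mxE eq_sym nj mulr0n mul0r.
Qed.

Lemma dot_diag n (d : 'rV[R]_n) y : dot y (diag_mx d *m y) = \sum_i d 0 i * y i 0 ^+ 2.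
Proof. by rewrite dotE; apply: eq_bigr => i _; rewrite diag_mulE; ring. Qed.

Lemma dot_orth n (Q : 'M[R]_n) x y : orth Q -> dot (Q *m x) (Q *m y) = dot x y.
Proof. by move=> Qo; rewrite dot_mulr mulmxA Qo mul1mx. Qed.

Lemma frob2 m n (M : 'M[R]_(m, n)) : frobenius M ^+ 2 = \tr (M^T *m M).
Proof.
rewrite /frobenius sqr_sqrtr; last first.
  by apply: sumr_ge0 => i _; apply: sumr_ge0 => j _; rewrite sqr_ge0.
rewrite exchange_big /mxtrace; apply: eq_bigr => j _; rewrite mxE.
by apply: eq_bigr => i _; rewrite mxE expr2.
Qed.

Lemma frob_ge0 m n (M : 'M[R]_(m, n)) : 0 <= frobenius M.
Proof. exact: sqrtr_ge0. Qed.

Lemma eq_sq_ge0 (a b : R) : 0 <= a -> 0 <= b -> a ^+ 2 = b ^+ 2 -> a = b.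
Proof. by move=> a0 b0 h; rewrite -(ger0_norm a0) -(ger0_norm b0) -!sqrtr_sqr h. Qed.

Lemma frob_orth n (Q M : 'M[R]_n) : orth Q -> frobenius (Q^T *m M *m Q) = frobenius M.
Proof.
move=> Qo; apply: eq_sq_ge0; rewrite ?frob_ge0 //.
rewrite !frob2 !trmx_mul trmxK !mulmxA -[Q^T *m M^T *m Q *m Q^T]mulmxA (orthT Qo) mulmx1.
by rewrite mxtrace_mulC !mulmxA (orthT Qo) mul1mx.
Qed.

Lemma frobN m n (M : 'M[R]_(m, n)) : frobenius (- M) = frobenius M.
Proof. by rewrite /frobenius; congr Num.sqrt; apply: eq_bigr => i _; apply: eq_bigr => j _; rewrite mxE sqrrN. Qed.

Lemma frob_diag n (d : 'rV[R]_n) : frobenius (diag_mx d) ^+ 2 = \sum_i d 0 i ^+ 2.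
Proof.
rewrite /frobenius sqr_sqrtr; last first.
  by apply: sumr_ge0 => i _; apply: sumr_ge0 => j _; rewrite sqr_ge0.
apply: eq_bigr => i _; rewrite (bigD1 i) //= big1 ?addr0; first by rewrite mxE eqxx mulr1n.
by move=> j /negPf nj; rewrite mxE eq_sym nj mulr0n expr0n.
Qed.

Lemma entry_le_frob n (M : 'M[R]_n) i : M i i ^+ 2 <= frobenius M ^+ 2.
Proof.
rewrite /frobenius sqr_sqrtr; last first.
  by apply: sumr_ge0 => k _; apply: sumr_ge0 => j _; rewrite sqr_ge0.
rewrite (bigD1 i) //= (bigD1 i) //= -addrA lerDl.
apply: addr_ge0; first by apply: sumr_ge0 => j _; rewrite sqr_ge0.
by apply: sumr_ge0 => k _; apply: sumr_ge0 => j _; rewrite sqr_ge0.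
Qed.

Lemma diag_sum_le n (M : 'M[R]_n) : \sum_i M i i ^+ 2 <= frobenius M ^+ 2.
Proof.
rewrite /frobenius sqr_sqrtr; last first.
  by apply: sumr_ge0 => k _; apply: sumr_ge0 => j _; rewrite sqr_ge0.
apply: ler_sum => i _; rewrite (bigD1 i) //= lerDl.
by apply: sumr_ge0 => j _; rewrite sqr_ge0.
Qed.

Lemma vnorm2E n (x : 'cV[R]_n) : vnorm2 x = Num.sqrt (dot x x).
Proof. by rewrite /vnorm2 dotE; congr Num.sqrt; apply: eq_bigr => i _; rewrite expr2. Qed.

Lemma sum_abs_le n (c : 'I_n -> R) :
  (\sum_i `|c i|) ^+ 2 <= n%:R * \sum_i c i ^+ 2.
Proof.
set a := fun i => `|c i|.
have ca : forall i, c i ^+ 2 = a i ^+ 2 by move=> i; rewrite /a real_normK ?num_real.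
under [X in _ <= _ * X]eq_bigr do rewrite ca.
set S1 := \sum_i a i; set S2 := \sum_i a i ^+ 2.
have key : 0 <= \sum_i \sum_j (a i - a j) ^+ 2 by
  apply: sumr_ge0 => i _; apply: sumr_ge0 => j _; rewrite sqr_ge0.
have e1 : forall i j, (a i - a j) ^+ 2 = a i ^+ 2 + a j ^+ 2 - 2 * (a i * a j).
  by move=> i j; ring.
have h1 : \sum_i \sum_(j < n) a i ^+ 2 = n%:R * S2.
  by rewrite /S2 mulr_sumr; apply: eq_bigr => i _; rewrite sumr_const card_ord mulr_natl.
have h2 : \sum_(i < n) \sum_j a j ^+ 2 = n%:R * S2.
  by rewrite sumr_const card_ord mulr_natl.
have h3 : \sum_i \sum_j 2 * (a i * a j) = 2 * S1 ^+ 2.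
  rewrite expr2 /S1 mulr_suml mulr_sumr; apply: eq_bigr => i _; rewrite !mulr_sumr.
  by apply: eq_bigr => j _; rewrite mulrA.
have e : \sum_i \sum_j (a i - a j) ^+ 2 = 2 * (n%:R * S2) - 2 * S1 ^+ 2.
  under eq_bigr do under eq_bigr do rewrite e1.
  under eq_bigr do rewrite sumrB big_split /=.
  rewrite sumrB big_split /= h1 h2 h3; ring.
lra.
Qed.
End S.

Section S. Variable R : realType.

Lemma qf_spec n (Q : 'M[R]_n) d x :
  dot x (Q *m diag_mx d *m Q^T *m x) = \sum_i d 0 i * (Q^T *m x) i 0 ^+ 2.
Proof. by rewrite -!mulmxA dot_mulr dot_diag. Qed.

Definition ei n (i : 'I_n) : 'cV[R]_n := delta_mx i 0.

Lemma qf_spec_ei n (Q : 'M[R]_n) d i : orth Q ->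
  dot (Q *m ei i) (Q *m diag_mx d *m Q^T *m (Q *m ei i)) = d 0 i.
Proof.
move=> Qo; rewrite qf_spec mulmxA Qo mul1mx (bigD1 i) //= big1 ?addr0.
  by rewrite !mxE !eqxx expr1n mulr1.
by move=> j /negPf nj; rewrite !mxE nj expr0n mulr0.
Qed.

Lemma ei_neq0 n (Q : 'M[R]_n) i : orth Q -> Q *m ei i != 0.
Proof.
move=> Qo; apply/eqP => /(congr1 (mulmx Q^T)); rewrite mulmxA Qo mul1mx mulmx0.
by move/matrixP/(_ i 0); rewrite !mxE !eqxx /= => /eqP; rewrite oner_eq0.
Qed.

Lemma psd_qf n (M : 'M[R]_n) x : psd M -> 0 <= dot x (M *m x).
Proof. by case=> _ h; rewrite -qfE. Qed.

Lemma posdef_qf n (M : 'M[R]_n) x : posdef M -> x != 0 -> 0 < dot x (M *m x).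
Proof. by case=> _ h /h; rewrite -qfE. Qed.

Lemma spec_ge0 n (M Q : 'M[R]_n) d : orth Q -> M = Q *m diag_mx d *m Q^T ->
  psd M -> forall i, 0 <= d 0 i.
Proof. by move=> Qo Me Mp i; rewrite -(qf_spec_ei d i Qo) -Me psd_qf. Qed.

Lemma spec_gt0 n (M Q : 'M[R]_n) d : orth Q -> M = Q *m diag_mx d *m Q^T ->
  posdef M -> forall i, 0 < d 0 i.
Proof. by move=> Qo Me Mp i; rewrite -(qf_spec_ei d i Qo) -Me posdef_qf // ei_neq0. Qed.

Lemma symm_spec n (Q : 'M[R]_n) d : symmx (Q *m diag_mx d *m Q^T).
Proof. by rewrite /symmx !trmx_mul trmxK tr_diag_mx mulmxA. Qed.

Lemma psd_spec n (Q : 'M[R]_n) (d : 'rV[R]_n) : (forall i, 0 <= d 0 i) -> psd (Q *m diag_mx d *m Q^T).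
Proof.
move=> d0; split; first exact: symm_spec.
move=> x; rewrite qfE qf_spec; apply: sumr_ge0 => i _; apply: mulr_ge0 => //.
exact: sqr_ge0.
Qed.

Lemma diag_mulmx n (d e : 'rV[R]_n) :
  diag_mx d *m diag_mx e = diag_mx (\row_i (d 0 i * e 0 i)).
Proof.
apply/matrixP => i j; rewrite !mxE (bigD1 i) //= big1 ?addr0.
  by rewrite !mxE eqxx mulr1n; case: (i == j); rewrite ?mulr1n ?mulr0n ?mulr0.
by move=> k /negPf nk; rewrite !mxE eq_sym nk mulr0n mul0r.
Qed.

Lemma sqrt_exists n (M : 'M[R]_n) : psd M -> exists S, psd S /\ S *m S = M.
Proof.
move=> Mp; have [Q [d [Qo Me]]] := spectral (proj1 Mp).
have d0 := spec_ge0 Qo Me Mp.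
exists (Q *m diag_mx (\row_i Num.sqrt (d 0 i)) *m Q^T); split.
  by apply: psd_spec => i; rewrite mxE sqrtr_ge0.
rewrite -mulmxA [Q^T *m _]mulmxA !mulmxA -[_ *m Q^T *m Q]mulmxA Qo mulmx1.
rewrite -[_ *m diag_mx _ *m diag_mx _]mulmxA diag_mulmx Me; congr (_ *m _ *m _).
by congr diag_mx; apply/rowP => i; rewrite !mxE -expr2 sqr_sqrtr.
Qed.

Lemma sqrtmx_spec n (M : 'M[R]_n) : psd M -> psd (sqrtmx M) /\ sqrtmx M *m sqrtmx M = M.
Proof.
move=> /sqrt_exists h; rewrite /sqrtmx.
by have := @xgetPex _ 0 [set S : 'M[R]_n | psd S /\ S *m S = M] h.
Qed.
End S.
Arguments ei {R n}.

Section S. Variable R : realType.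
Local Open Scope classical_set_scope.

Lemma diag_ei n (d : 'rV[R]_n) i : diag_mx d *m ei i = d 0 i *: ei i.
Proof.
apply/matrixP => j k; rewrite ord1 diag_mulE !mxE eqxx andbT.
by case: eqVneq => [->|]; rewrite ?mulr1 ?mulr0.
Qed.

Lemma eigen_spec n (E Q : 'M[R]_n) mu i : orth Q -> E = Q *m diag_mx mu *m Q^T ->
  E *m (Q *m ei i) = mu 0 i *: (Q *m ei i).
Proof.
by move=> Qo ->; rewrite -!mulmxA [Q^T *m _]mulmxA Qo mul1mx diag_ei scalemxAr.
Qed.

Lemma orthTT n (Q : 'M[R]_n) : orth Q -> orth Q^T.
Proof. by move=> Qo; rewrite /orth trmxK orthT. Qed.

Lemma dot_ei_orth n (Q : 'M[R]_n) i : orth Q -> dot (Q *m ei i) (Q *m ei i) = 1.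
Proof.
move=> Qo; rewrite dot_orth // dotE (bigD1 i) //= big1 ?addr0; first by rewrite !mxE !eqxx mulr1.
by move=> j /negPf nj; rewrite !mxE nj mulr0.
Qed.

Lemma dot_ei_diag n (N : 'M[R]_n) i : dot (ei i) (N *m ei i) = N i i.
Proof.
rewrite dotE (bigD1 i) //= big1 ?addr0.
  rewrite mxE !eqxx mul1r mxE (bigD1 i) //= big1 ?addr0; first by rewrite !mxE !eqxx mulr1.
  by move=> j /negPf nj; rewrite !mxE nj mulr0.
by move=> j /negPf nj; rewrite !mxE nj mul0r.
Qed.

Lemma dot_ei_entry n (Q M : 'M[R]_n) i :
  dot (Q *m ei i) (M *m (Q *m ei i)) = (Q^T *m M *m Q) i i.
Proof.
by rewrite dotC dot_mulr dotC !mulmxA dot_ei_diag.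
Qed.

Lemma eig_D n (S X : 'M[R]_n) q mu : symmx S -> symmx X ->
  (S - X) *m q = mu *: q ->
  dot q ((S *m S - X *m X) *m q) = mu * (dot q (S *m q) + dot q (X *m q)).
Proof.
move=> Ss Xs Eq.
have hq : S *m q - X *m q = mu *: q by rewrite -mulmxBl.
have h1 : dot q (S *m (S *m q)) = dot (S *m q) (S *m q) by rewrite dot_mulr Ss.
have h2 : dot q (X *m (X *m q)) = dot (X *m q) (X *m q) by rewrite dot_mulr Xs.
have h3 : dot (S *m q - X *m q) (S *m q + X *m q) = mu * (dot q (S *m q) + dot q (X *m q)).
  by rewrite hq dotZl dotDr.
rewrite mulmxBl dotBr -!mulmxA h1 h2 -h3 dotBl !dotDr [dot (X *m q) (S *m q)]dotC; ring.
Qed.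

Lemma eig_D_bounds n (S X : 'M[R]_n) q mu : psd S -> psd X -> dot q q = 1 ->
  (S - X) *m q = mu *: q ->
  mu ^+ 2 <= `|dot q ((S *m S - X *m X) *m q)| /\
  `|mu| * dot q (S *m q) <= `|dot q ((S *m S - X *m X) *m q)|.
Proof.
move=> Sp Xp qq Eq; rewrite (eig_D (proj1 Sp) (proj1 Xp) Eq).
have s0 := psd_qf q Sp; have x0 := psd_qf q Xp.
have hmu : dot q (S *m q) - dot q (X *m q) = mu.
  by rewrite -dotBr -mulmxBl Eq dotZr qq mulr1.
rewrite normrM (ger0_norm (addr_ge0 s0 x0)); split; last first.
  by rewrite ler_wpM2l // lerDl.
rewrite -hmu; move: s0 x0; set s := dot q (S *m q); set x := dot q (X *m q) => s0 x0.
case: (lerP 0 (s - x)) => h.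
  by rewrite ger0_norm //; nra.
by rewrite ltr0_norm //; nra.
Qed.

Lemma vnorm_bound n (E Q : 'M[R]_n) mu B x : orth Q -> E = Q *m diag_mx mu *m Q^T ->
  0 <= B -> (forall i, mu 0 i ^+ 2 <= B ^+ 2) -> dot x x = 1 -> vnorm2 (E *m x) <= B.
Proof.
move=> Qo Ee B0 hB xx; rewrite vnorm2E -(ger0_norm B0) -sqrtr_sqr ler_sqrt ?sqr_ge0 //.
rewrite Ee -!mulmxA dot_orth // dotE.
have -> : B ^+ 2 = B ^+ 2 * dot (Q^T *m x) (Q^T *m x) by rewrite dot_orth ?xx ?mulr1 //; exact: orthTT.
rewrite dotE mulr_sumr; apply: ler_sum => i _; rewrite diag_mulE.
by rewrite -expr2 exprMn -expr2 ler_wpM2r ?sqr_ge0.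
Qed.

Lemma specnorm_le m n (M : 'M[R]_(m, n)) B : 0 <= B ->
  (forall x, vnorm2 x = 1 -> vnorm2 (M *m x) <= B) -> specnorm M <= B.
Proof.
move=> B0 h; rewrite /specnorm.
set A := [set r | _].
have [->|/set0P [r Ar]] := eqVneq A set0; first by rewrite sup0.
  apply: ge_sup; first by exists r.
by move=> s [x [x1 ->]]; apply: h.
Qed.
End S.

Section S. Variable R : realType.
Local Open Scope classical_set_scope.

Lemma eigen_col n (T : 'M[R]_n) a : symmx T -> eigenvalue T a ->
  exists z : 'cV_n, z != 0 /\ T *m z = a *: z.
Proof.
move=> Ts /eigenvalueP [w wT wn0]; exists w^T; split; first by rewrite trmx_eq0.
by rewrite -{1}Ts -trmx_mul wT linearZ.
Qed.

Lemma col_eigen n (T : 'M[R]_n) a (z : 'cV[R]_n) : symmx T -> z != 0 -> T *m z = a *: z -> eigenvalue T a.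
Proof.
move=> Ts zn0 Tz; apply/eigenvalueP; exists z^T; last by rewrite trmx_eq0.
by rewrite -{1}Ts -trmx_mul Tz linearZ.
Qed.

Lemma dot_gt0 n (z : 'cV[R]_n) : z != 0 -> 0 < dot z z.
Proof. by move=> zn0; rewrite lt_def dot_ge0 andbT; apply/eqP => /dot_eq0 /eqP; rewrite (negPf zn0). Qed.

Lemma eig_ge0 n (T : 'M[R]_n) a : psd T -> eigenvalue T a -> 0 <= a.
Proof.
move=> Tp /(eigen_col (proj1 Tp)) [z [zn0 Tz]].
have := psd_qf z Tp; rewrite Tz dotZr => h.
by rewrite -(pmulr_lge0 _ (dot_gt0 zn0)).
Qed.

Lemma spec_sq n (S P : 'M[R]_n) s : orth P -> S = P *m diag_mx s *m P^T ->
  S *m S = P *m diag_mx (\row_i (s 0 i ^+ 2)) *m P^T.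
Proof.
move=> Po ->; rewrite -mulmxA [P^T *m _]mulmxA !mulmxA -[_ *m P^T *m P]mulmxA Po mulmx1.
rewrite -[_ *m diag_mx _ *m diag_mx _]mulmxA diag_mulmx.
have -> : (\row_i (s 0 i * s 0 i)) = \row_i s 0 i ^+ 2 by apply/rowP => i; rewrite !mxE -expr2.
by [].
Qed.

Lemma lam_le n (S P : 'M[R]_n) s : orth P -> S = P *m diag_mx s *m P^T ->
  (forall i, 0 <= s 0 i) -> forall i, lambda_min (S *m S) <= s 0 i ^+ 2.
Proof.
move=> Po Se s0 i; have SS := spec_sq Po Se.
have SSp : psd (S *m S) by rewrite SS; apply: psd_spec => j; rewrite mxE sqr_ge0.
have ev : eigenvalue (S *m S) (s 0 i ^+ 2).
  apply: (col_eigen (proj1 SSp) (ei_neq0 i Po)).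
  by rewrite (eigen_spec i Po SS) mxE.
apply: (ge_inf _ ev); exists 0 => a /= ea; exact: eig_ge0 SSp ea.
Qed.

Lemma sqrt_lam_le n (S : 'M[R]_n) q : psd S -> dot q q = 1 ->
  Num.sqrt (lambda_min (S *m S)) <= dot q (S *m q).
Proof.
move=> Sp qq; have [P [s [Po Se]]] := spectral (proj1 Sp).
have s0 := spec_ge0 Po Se Sp.
have hl : forall i, Num.sqrt (lambda_min (S *m S)) <= s 0 i.
  move=> i; rewrite -[s 0 i](ger0_norm (s0 i)) -sqrtr_sqr.
  by apply: ler_wsqrtr; exact: (lam_le Po Se s0 i).
have -> : dot q (S *m q) = \sum_i s 0 i * (P^T *m q) i 0 ^+ 2 by rewrite Se qf_spec.
have -> : Num.sqrt (lambda_min (S *m S)) =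
   Num.sqrt (lambda_min (S *m S)) * dot (P^T *m q) (P^T *m q).
  by rewrite dot_orth ?qq ?mulr1 //; exact: orthTT.
rewrite dotE mulr_sumr; apply: ler_sum => i _; rewrite -expr2.
by rewrite ler_wpM2r ?sqr_ge0.
Qed.

Lemma eig_spec_val n (T P : 'M[R]_n) t a : orth P -> T = P *m diag_mx t *m P^T ->
  eigenvalue T a -> exists i, t 0 i = a.
Proof.
move=> Po Te ev; have Ts : symmx T by rewrite Te; apply: symm_spec.
have [z [zn0 Tz]] := eigen_col Ts ev.
set y := P^T *m z.
have yn0 : y != 0.
  apply: contra zn0 => /eqP y0; apply/eqP.
  by rewrite -[z]mul1mx -(orthT Po) -mulmxA -/y y0 mulmx0.
have dy : diag_mx t *m y = a *: y.
  by rewrite /y scalemxAr -Tz Te !mulmxA Po mul1mx.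
have [i yi] : exists i, y i 0 != 0.
  have : ~ (forall i, y i 0 = 0).
    move=> h; move: yn0; rewrite (_ : y = 0) ?eqxx //.
    by apply/matrixP => j k; rewrite ord1 h mxE.
  by move/existsNP => [i /eqP yi]; exists i.
exists i; have /matrixP /(_ i 0) := dy; rewrite diag_mulE [in RHS]mxE.
exact: (mulIf yi).
Qed.

Lemma lam_gt0 n (T : 'M[R]_n) : (0 < n)%N -> posdef T -> 0 < lambda_min T.
Proof.
move=> n0 Tp; have [P [t [Po Te]]] := spectral (proj1 Tp).
have t0 := spec_gt0 Po Te Tp.
set c := \big[Num.min/1]_i t 0 i.
have c0 : 0 < c by apply: (big_ind (fun x => 0 < x)) => // x y x0 y0; rewrite lt_min x0.
have cle : forall i, c <= t 0 i.
  by move=> i; rewrite /c (bigD1 i) //= ge_min lexx.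
apply: (lt_le_trans c0); apply: lb_le_inf.
  exists (t 0 (Ordinal n0)).
  apply: (col_eigen (proj1 Tp) (ei_neq0 (Ordinal n0) Po)).
  exact: (eigen_spec _ Po Te).
by move=> a /(eig_spec_val Po Te) [i <-].
Qed.
End S.

Section S. Variable R : realType.
Local Open Scope classical_set_scope.

Lemma abs_le_sq (a b : R) : 0 <= b -> a ^+ 2 <= b ^+ 2 -> `|a| <= b.
Proof. by move=> b0 h; rewrite -sqrtr_sqr -(ger0_norm b0) -sqrtr_sqr ler_wsqrtr. Qed.

Lemma sq_le_abs (a b : R) : `|a| <= b -> a ^+ 2 <= b ^+ 2.
Proof.
move=> h; rewrite -real_normK ?num_real //; apply: lerXn2r => //.
  by rewrite nnegrE.
by rewrite nnegrE (le_trans _ h).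
Qed.

Lemma vnorm1 n (x : 'cV[R]_n) : vnorm2 x = 1 -> dot x x = 1.
Proof. by rewrite vnorm2E => h; rewrite -[dot x x]sqr_sqrtr ?dot_ge0 // h expr1n. Qed.

Lemma core n (S X : 'M[R]_n) : psd S -> psd X -> posdef (S *m S) ->
  frobenius (S - X) <= Num.sqrt (Num.sqrt n%:R * frobenius (S *m S - X *m X)) /\
  specnorm (S - X) <= Num.min (frobenius (S *m S - X *m X) / Num.sqrt (lambda_min (S *m S)))
                              (Num.sqrt (Num.sqrt n%:R * frobenius (S *m S - X *m X))).
Proof.
move=> Sp Xp SSp.
set E := S - X; set D := S *m S - X *m X.
have Es : E^T = E by rewrite /E linearB /= (proj1 Sp) (proj1 Xp).
have [Q [mu [Qo Ee]]] := spectral Es.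
pose c i := (Q^T *m D *m Q) i i.
have hc : forall i, mu 0 i ^+ 2 <= `|c i| /\ `|mu 0 i| * dot (Q *m ei i) (S *m (Q *m ei i)) <= `|c i|.
  move=> i; rewrite /c -dot_ei_entry; apply: eig_D_bounds => //.
    exact: dot_ei_orth.
  exact: eigen_spec.
have cD : forall i, `|c i| <= frobenius D.
  by move=> i; apply: abs_le_sq; rewrite ?frob_ge0 // -(frob_orth D Qo) entry_le_frob.
have fE : frobenius E ^+ 2 = \sum_i mu 0 i ^+ 2.
  by rewrite -(frob_orth E Qo) Ee !mulmxA Qo mul1mx -mulmxA Qo mulmx1 frob_diag.
have sumc : \sum_i `|c i| <= Num.sqrt n%:R * frobenius D.
  rewrite -[X in X <= _]ger0_norm ?sumr_ge0 //; apply: abs_le_sq; first by rewrite mulr_ge0 ?sqrtr_ge0 ?frob_ge0.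
  rewrite exprMn sqr_sqrtr ?ler0n //; apply: (le_trans (sum_abs_le c)).
  rewrite ler_wpM2l ?ler0n // -(frob_orth D Qo); exact: diag_sum_le.
have B2ge : frobenius E <= Num.sqrt (Num.sqrt n%:R * frobenius D).
  rewrite -[frobenius E](ger0_norm (frob_ge0 _)) -sqrtr_sqr; apply: ler_wsqrtr.
  rewrite fE; apply: (le_trans _ sumc); apply: ler_sum => i _; exact: (proj1 (hc i)).
split => //.
apply: specnorm_le.
  by rewrite le_min; apply/andP; split; [apply: divr_ge0|]; rewrite ?sqrtr_ge0 ?frob_ge0.
move=> x /vnorm1 xx; apply: (vnorm_bound Qo Ee) => //.
  by rewrite le_min; apply/andP; split; [apply: divr_ge0|]; rewrite ?sqrtr_ge0 ?frob_ge0.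
move=> i; apply: sq_le_abs; rewrite le_min; apply/andP; split; last first.
  apply: le_trans B2ge; apply: abs_le_sq; rewrite ?frob_ge0 // fE.
  by rewrite (bigD1 i) //= lerDl sumr_ge0 // => j _; rewrite sqr_ge0.
have n0 : (0 < n)%N := leq_ltn_trans (leq0n i) (ltn_ord i).
have lpos := lam_gt0 n0 SSp.
rewrite ler_pdivlMr ?sqrtr_gt0 //.
apply: (le_trans _ (cD i)); apply: le_trans (proj2 (hc i)).
rewrite ler_wpM2l ?normr_ge0 //; apply: sqrt_lam_le => //; exact: dot_ei_orth.
Qed.
End S.

Section S. Variable R : realType.
Local Open Scope classical_set_scope.

Lemma inv_uniq n (X Y : 'M[R]_n) : X *m Y = 1%:M -> invmx X = Y.
Proof.
move=> XY; have [Xu _] := mulmx1_unit XY.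
by rewrite -[invmx X]mulmx1 -XY mulmxA mulVmx // mul1mx.
Qed.

Lemma invmxM' n (A B : 'M[R]_n) : A \in unitmx -> B \in unitmx ->
  invmx (A *m B) = invmx B *m invmx A.
Proof.
move=> Au Bu; apply: inv_uniq.
by rewrite mulmxA -[A *m B *m _]mulmxA mulmxV // mulmx1 mulmxV.
Qed.

Lemma posdef_psd n (M : 'M[R]_n) : posdef M -> psd M.
Proof.
case=> Ms h; split => // x; have [->|xn0] := eqVneq x 0.
  by rewrite mulmx0 mxE.
exact/ltW/h.
Qed.

Lemma posdef_unit n (M : 'M[R]_n) : posdef M -> M \in unitmx.
Proof.
move=> Mp; rewrite unitmxE unitfE; apply/negP => /det0P [v vn0 vM].
have : M *m v^T = 0 by rewrite -(proj1 Mp) -trmx_mul vM trmx0.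
move=> Mv; have := posdef_qf Mp (x:=v^T); rewrite trmx_eq0 => /(_ vn0).
by rewrite Mv /dot mulmx0 mxE ltxx.
Qed.

Lemma inv_posdef n (M : 'M[R]_n) : posdef M -> posdef (invmx M).
Proof.
move=> Mp; have Mu := posdef_unit Mp; split.
  by rewrite /symmx trmx_inv (proj1 Mp).
move=> x xn0; rewrite qfE.
set y := invmx M *m x.
have xe : x = M *m y by rewrite /y mulKVmx.
have yn0 : y != 0 by apply: contra xn0 => /eqP y0; rewrite xe y0 mulmx0.
rewrite -/y; have -> : dot x y = dot y (M *m y) by rewrite {1}xe dotC.
exact: posdef_qf.
Qed.

Lemma sqrt_pd n (M : 'M[R]_n) : posdef M -> posdef (sqrtmx M).
Proof.
move=> Mp; have [Sp SS] := sqrtmx_spec (posdef_psd Mp).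
set S := sqrtmx M in Sp SS *.
have [Tp TT] := sqrtmx_spec Sp.
set T := sqrtmx S in Tp TT.
split; first exact: (proj1 Sp).
move=> x xn0; rewrite qfE lt_def (psd_qf x Sp) andbT; apply/eqP => h.
have : dot x (M *m x) = 0.
  have Tx : T *m x = 0.
    by apply: dot_eq0; rewrite -{1}(proj1 Tp) -dot_mulr mulmxA TT.
  by rewrite -SS -TT -!mulmxA Tx !mulmx0 /dot mulmx0 mxE.
by move/eqP; rewrite gt_eqF // posdef_qf.
Qed.

Lemma sq_expand n (P C : 'M[R]_n) g :
  (P + g *: C) *m (P + g *: C) = P *m P + g *: (P *m C + C *m P) + (g * g) *: (C *m C).
Proof.
rewrite mulmxDl !mulmxDr -!scalemxAl -!scalemxAr scalerA scalerDr !addrA.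
by [].
Qed.

Lemma woodbury n k (A : 'M[R]_n) (Z : 'M[R]_(n, k)) (al : R) :
  A \in unitmx -> (1%:M + al *: (Z^T *m invmx A *m Z)) \in unitmx ->
  invmx (A + al *: (Z *m Z^T)) =
  invmx A - al *: (invmx A *m Z *m invmx (1%:M + al *: (Z^T *m invmx A *m Z)) *m (Z^T *m invmx A)).
Proof.
move=> Au Mu.
set Ai := invmx A; set M := 1%:M + _; set N := invmx M; set L := Z^T *m Ai.
apply: inv_uniq.
have h1 : A *m (Ai - al *: (Ai *m Z *m N *m L)) = 1%:M - al *: (Z *m N *m L).
  by rewrite mulmxBr -scalemxAr !mulmxA mulmxV // !mul1mx.
have hK : al *: (Z^T *m Ai *m Z) = M - 1%:M by rewrite /M addrC addKr.
have h2 : al *: (Z *m Z^T) *m (Ai - al *: (Ai *m Z *m N *m L)) = al *: (Z *m N *m L).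
  rewrite mulmxBr -!scalemxAl -!scalemxAr !mulmxA.
  have e : al *: (Z *m Z^T *m Ai *m Z *m N *m Z^T *m Ai) = Z *m Z^T *m Ai - Z *m N *m Z^T *m Ai.
    have -> : Z *m Z^T *m Ai *m Z *m N *m Z^T *m Ai = Z *m (Z^T *m Ai *m Z) *m N *m Z^T *m Ai.
      by rewrite !mulmxA.
    have -> : al *: (Z *m (Z^T *m Ai *m Z) *m N *m Z^T *m Ai) = Z *m (al *: (Z^T *m Ai *m Z)) *m N *m Z^T *m Ai by rewrite -scalemxAr !scalemxAl.
    rewrite hK mulmxBr mulmx1 !mulmxBl -[Z *m M *m N]mulmxA mulmxV // mulmx1.
    by [].
  by rewrite e scalerBr opprB addrC subrK.
rewrite mulmxDl h1 h2 /L !mulmxA subrK //.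
Qed.


Lemma M_posdef n k (A : 'M[R]_n) (Z : 'M[R]_(n, k)) (al : R) :
  (al = 1 \/ al = -1) -> posdef A -> posdef (A + al *: (Z *m Z^T)) ->
  posdef (1%:M + al *: (Z^T *m invmx A *m Z)).
Proof.
move=> hal Ap Bp; have Au := posdef_unit Ap.
have Ais : (invmx A)^T = invmx A by rewrite trmx_inv (proj1 Ap).
split.
  by rewrite /symmx linearD /= trmx1 linearZ /= !trmx_mul trmxK Ais mulmxA.
move=> x xn0; rewrite qfE mulmxDl mul1mx dotDr -scalemxAl dotZr.
set y := invmx A *m (Z *m x).
have -> : Z^T *m invmx A *m Z *m x = Z^T *m y by rewrite /y !mulmxA.
have Ay : A *m y = Z *m x by rewrite /y mulKVmx.
set t := Z^T *m y.
have xt : dot x t = dot y (A *m y) by rewrite /t [LHS]dot_mulr trmxK dotC Ay.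
have xx0 : 0 < dot x x by apply: dot_gt0.
have yAy := psd_qf y (posdef_psd Ap).
case: hal => e; rewrite e in Bp *; first by rewrite mul1r xt; lra.
have [y0|yn0] := eqVneq y 0.
  by rewrite xt y0 mulmx0 (_ : dot (0 : 'cV[R]_n) 0 = 0) ?mulr0 ?addr0 // dotE big1 // => i _; rewrite mxE mul0r.
have := posdef_qf Bp yn0; rewrite mulmxDl dotDr -scalemxAl dotZr -mulmxA (dot_mulr Z) -/t.
rewrite -xt => hB.
have := dot_ge0 (x - t); rewrite !(dotBl, dotBr) (dotC t x) => h2.
lra.
Qed.
End S.

Lemma idG (R : realType) n (a w p q c : 'M[R]_n) g : g * g = 1 ->
  a + g *: w - (a + g *: (p + q) + (g * g) *: c) = g *: (w - p - q - g *: c).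
Proof.
move=> gg; rewrite gg scale1r !scalerBr scalerDr scalerA gg scale1r.
by rewrite -[a + _ + c]addrA [a + g *: w]addrC addrKA !opprD !addrA.
Qed.

Lemma frobZ1 (R : realType) n (M : 'M[R]_n) g : g = 1 \/ g = -1 -> frobenius (g *: M) = frobenius M.
Proof. by case=> ->; rewrite ?scale1r ?scaleN1r ?frobN. Qed.

Lemma key_exists (R : realType) n (E Res : 'M[R]_n) L :
  (exists S X : 'M[R]_n, [/\ psd S, psd X, posdef (S *m S), E = S - X &
     frobenius (S *m S - X *m X) = frobenius Res /\ L = S *m S]) ->
  frobenius E <= Num.sqrt (Num.sqrt (n%:R) * frobenius Res) /\
  specnorm E <=
    Num.min (frobenius Res / Num.sqrt (lambda_min L))
            (Num.sqrt (Num.sqrt (n%:R) * frobenius Res)).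
Proof.
move=> [S [X [Sp Xp SSp -> [<- ->]]]]; exact: core.
Qed.

Theorem corollary7 (R : realType) (n k : nat)
  (A : 'M[R]_n) (Z : 'M[R]_(n, k)) (alpha beta : R) (Ct : 'M[R]_n) :
  symmx A ->
  (alpha = 1 \/ alpha = -1) ->
  (beta = 1 \/ beta = -1) ->
  posdef A ->
  posdef (A + alpha *: (Z *m Z^T)) ->
  psd Ct ->
  posdef (halfpowmx beta A + (alpha * beta) *: Ct) ->
  let V : 'M[R]_(n, k) :=
    if beta == 1 then Z
    else invmx A *m Z *m invmx (sqrtmx (1%:M + alpha *: (Z^T *m invmx A *m Z))) in
  let Res : 'M[R]_n :=
    V *m V^T - halfpowmx beta A *m Ct - Ct *m halfpowmx beta A
    - (alpha * beta) *: (Ct *m Ct) in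
  let E : 'M[R]_n :=
    halfpowmx beta (A + alpha *: (Z *m Z^T)) - (halfpowmx beta A + (alpha * beta) *: Ct) in
  frobenius E <= Num.sqrt (Num.sqrt (n%:R) * frobenius Res) /\
  specnorm E <=
    Num.min (frobenius Res / Num.sqrt (lambda_min (powmx beta (A + alpha *: (Z *m Z^T)))))
            (Num.sqrt (Num.sqrt (n%:R) * frobenius Res)).
Proof.
move=> sA hal hbe Ap Bp Cp Xp V Res E.
apply: key_exists.
have aa : alpha * alpha = 1 by case: hal => ->; rewrite ?mulr1 ?mulrNN ?mulr1.
have [Pp PP] := sqrtmx_spec (posdef_psd Ap).
have [Sp SS] := sqrtmx_spec (posdef_psd Bp).
have Cs : Ct^T = Ct := proj1 Cp.
case: hbe => eb; rewrite /E /Res /V {E Res V}; rewrite eb /halfpowmx /powmx in Xp *.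
- rewrite eqxx mulr1 in Xp *.
  exists (sqrtmx (A + alpha *: (Z *m Z^T))), (sqrtmx A + alpha *: Ct); split => //.
  + exact: posdef_psd.
  + by rewrite SS.
  split => //.
  rewrite sq_expand SS PP idG //; apply: frobZ1 => //.
- have ne : (-1 == 1 :> R) = false.
    by apply/negbTE; rewrite eq_sym -subr_eq0 opprK -(natrD R 1 1) pnatr_eq0.
  rewrite ne in Xp *.
  have Bu := posdef_unit Bp; have Au := posdef_unit Ap.
  have Sqpd := sqrt_pd Bp; have Squ := posdef_unit Sqpd.
  have Ppd := sqrt_pd Ap; have Pu := posdef_unit Ppd.
  have SSe : invmx (sqrtmx (A + alpha *: (Z *m Z^T))) *m invmx (sqrtmx (A + alpha *: (Z *m Z^T)))
      = invmx (A + alpha *: (Z *m Z^T)) by rewrite -invmxM' // SS.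
  have PPe : invmx (sqrtmx A) *m invmx (sqrtmx A) = invmx A by rewrite -invmxM' // PP.
  have Mp := M_posdef hal Ap Bp.
  set M := 1%:M + _ in Mp *.
  have [Mq MM] := sqrtmx_spec (posdef_psd Mp).
  have Mu := posdef_unit Mp.
  have Nu := posdef_unit (sqrt_pd Mp).
  have Ns : (invmx (sqrtmx M))^T = invmx (sqrtmx M) by rewrite trmx_inv (proj1 Mq).
  have NN : invmx (sqrtmx M) *m invmx (sqrtmx M) = invmx M by rewrite -invmxM' // MM.
  have Ais : (invmx A)^T = invmx A by rewrite trmx_inv (proj1 Ap).
  have VV : invmx A *m Z *m invmx (sqrtmx M) *m (invmx A *m Z *m invmx (sqrtmx M))^T =
      invmx A *m Z *m invmx M *m (Z^T *m invmx A).
    by rewrite !trmx_mul Ns Ais -NN !mulmxA.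
  have eW : invmx (A + alpha *: (Z *m Z^T)) =
      invmx A + (alpha * -1) *: (invmx A *m Z *m invmx M *m (Z^T *m invmx A)).
    by rewrite woodbury // mulrN1 scaleNr.
  have gg : (alpha * -1) * (alpha * -1) = 1 by rewrite !mulrN1 mulrNN.
  have g1 : alpha * -1 = 1 \/ alpha * -1 = -1.
    by case: hal => ->; [right; rewrite mul1r | left; rewrite mulrNN mulr1].
  exists (invmx (sqrtmx (A + alpha *: (Z *m Z^T)))), (invmx (sqrtmx A) + (alpha * -1) *: Ct).
  split => //.
  + exact/posdef_psd/inv_posdef.
  + exact: posdef_psd.
  + by rewrite SSe; apply: inv_posdef.
  split => //.
  by rewrite sq_expand SSe PPe eW idG // frobZ1 // VV.
Qed.
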